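(* Let $G$ be a finite group and $T$ a $G$-Tambara functor. The product of two finitely generated Tambara ideals of $T$ is finitely generated.
   Context: All rings are commutative with unit. A $G$-Tambara functor $T$ consists of commutative rings $T(G/H)$ for subgroups $H\le G$ with restriction ring maps, additive transfer maps, multiplicative norm maps and conjugation isomorphisms satisfying the standard Tambara axioms (Hill–Mazur). A Tambara ideal is a family of ring ideals $I(G/H)\subseteq T(G/H)$ closed under restriction, transfer, norm and conjugation. A Tambara ideal is finitely generated if it equals $\langle x_1,\dots,x_n\rangle$, the smallest Tambara ideal containing finitely many elements $x_i\in T(G/H_i)$ at their respective levels. The product $IJ$ of Tambara ideals is the Tambara ideal generated by the levelwise products $I(G/H)J(G/H)$, $H\le G$. *)

(* Defs.v *)
From HB Require Import structures.
From mathcomp Require Import all_boot all_order all_algebra all_fingroup.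
From Stdlib Require List.
Set Implicit Arguments. Unset Strict Implicit. Unset Printing Implicit Defensive.
Import GRing.Theory.
Local Open Scope ring_scope.

(* Finite G-sets (G = the finite group gT).  MathComp convention: RIGHT     *)
(* actions, act (act x g) h = act x (g * h).                                *)
Record gset (gT : finGroupType) := GSet {
  gcar :> finType;
  gact : gcar -> gT -> gcar;
  gact1 : forall x, gact x 1%g = x;
  gactM : forall x g h, gact x (g * h)%g = gact (gact x g) h }.

Section GSets.
Variable gT : finGroupType.

Definition equivariant (X Y : gset gT) (f : X -> Y) :=
  forall x g, f (gact x g) = gact (f x) g.

Definition is_pullback (X Y Z P : gset gT) (f : X -> Y) (g : Z -> Y)
  (p1 : P -> X) (p2 : P -> Z) :=
  (forall u, f (p1 u) = g (p2 u)) /\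
  (forall x z, f x = g z -> exists! u, p1 u = x /\ p2 u = z).

(* Exponential diagram (Tambara):
      X <-p- A <-e- Z
      |f            |f'
      Y <----q----- Pi
   Z = X x_Y Pi (via p \o e and f'), and Pi -> Pi_f(A),
   pi |-> (q pi, section x |-> e(z_{x,pi})) is a bijection onto pairs
   (y, s) with s a section of p over the fibre f^-1(y)
   (sections encoded as partial maps X -> option A). *)
Definition is_exponential (X Y A Pi Z : gset gT) (f : X -> Y) (p : A -> X)
  (q : Pi -> Y) (f' : Z -> Pi) (e : Z -> A) :=
  (forall z, f (p (e z)) = q (f' z)) /\
  (forall x pi, f x = q pi -> exists! z, p (e z) = x /\ f' z = pi) /\
  (forall (y : Y) (s : X -> option A),
     (forall x, f x = y -> exists2 a, s x = Some a & p a = x) ->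
     exists! pi, q pi = y /\ (forall z, f' z = pi -> s (p (e z)) = Some (e z))).

Definition is_coproduct (X Y Z : gset gT) (i : X -> Z) (j : Y -> Z) :=
  injective i /\ injective j /\ (forall x y, i x <> j y) /\
  (forall z, (exists x, i x = z) \/ (exists y, j y = z)).

End GSets.

Record tambara (gT : finGroupType) := Tambara {
  tam : gset gT -> comPzRingType;
  tres : forall X Y : gset gT, (X -> Y) -> tam Y -> tam X;
  ttr  : forall X Y : gset gT, (X -> Y) -> tam X -> tam Y;
  tnm  : forall X Y : gset gT, (X -> Y) -> tam X -> tam Y;
  tres_rmorph : forall (X Y : gset gT) (f : X -> Y), equivariant f ->
    tres f 0 = 0 /\ tres f 1 = 1 /\
    (forall a b, tres f (a + b) = tres f a + tres f b) /\
    (forall a b, tres f (a * b) = tres f a * tres f b);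
  ttr_additive : forall (X Y : gset gT) (f : X -> Y), equivariant f ->
    ttr f 0 = 0 /\ (forall a b, ttr f (a + b) = ttr f a + ttr f b);
  tnm_multiplicative : forall (X Y : gset gT) (f : X -> Y), equivariant f ->
    tnm f 1 = 1 /\ (forall a b, tnm f (a * b) = tnm f a * tnm f b);
  tres_id : forall (X : gset gT) (a : tam X), tres (@id X) a = a;
  ttr_id : forall (X : gset gT) (a : tam X), ttr (@id X) a = a;
  tnm_id : forall (X : gset gT) (a : tam X), tnm (@id X) a = a;
  tres_comp : forall (X Y Z : gset gT) (f : X -> Y) (g : Y -> Z), equivariant f ->
    equivariant g -> forall a, tres (g \o f) a = tres f (tres g a);
  ttr_comp : forall (X Y Z : gset gT) (f : X -> Y) (g : Y -> Z), equivariant f ->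
    equivariant g -> forall a, ttr (g \o f) a = ttr g (ttr f a);
  tnm_comp : forall (X Y Z : gset gT) (f : X -> Y) (g : Y -> Z), equivariant f ->
    equivariant g -> forall a, tnm (g \o f) a = tnm g (tnm f a);
  (* additivity: T(empty) = 0 and T(X + Y) = T(X) x T(Y) *)
  tam_empty : forall X : gset gT, #|X| = 0%N -> (1 : tam X) = 0;
  tam_coprod : forall (X Y Z : gset gT) (i : X -> Z) (j : Y -> Z),
    equivariant i -> equivariant j -> is_coproduct i j ->
    bijective (fun u : tam Z => (tres i u, tres j u));
  ttr_pullback : forall (X Y Z P : gset gT) (f : X -> Y) (g : Z -> Y) (p1 : P -> X)
    (p2 : P -> Z), equivariant f -> equivariant g -> equivariant p1 ->
    equivariant p2 -> is_pullback f g p1 p2 ->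
    forall a, tres g (ttr f a) = ttr p2 (tres p1 a);
  tnm_pullback : forall (X Y Z P : gset gT) (f : X -> Y) (g : Z -> Y) (p1 : P -> X)
    (p2 : P -> Z), equivariant f -> equivariant g -> equivariant p1 ->
    equivariant p2 -> is_pullback f g p1 p2 ->
    forall a, tres g (tnm f a) = tnm p2 (tres p1 a);
  tdistr : forall (X Y A Pi Z : gset gT) (f : X -> Y) (p : A -> X) (q : Pi -> Y)
    (f' : Z -> Pi) (e : Z -> A), equivariant f -> equivariant p ->
    equivariant q -> equivariant f' -> equivariant e ->
    is_exponential f p q f' e ->
    forall a, tnm f (ttr p a) = ttr q (tnm f' (tres e a)) }.

Section Orbits.
Variable gT : finGroupType.
Local Open Scope group_scope.

Definition orbit_car (H : {group gT}) : finType :=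
  {C : {set gT} | C \in rcosets H [set: gT]}.

Lemma rcosets_mulr (H : {group gT}) (C : {set gT}) g :
  C \in rcosets H [set: gT] -> C :* g \in rcosets H [set: gT].
Proof.
case/rcosetsP=> x _ ->; apply/rcosetsP; exists (x * g); first by rewrite inE.
by rewrite rcosetM.
Qed.

Lemma rcosets_mem (H : {group gT}) x : H :* x \in rcosets H [set: gT].
Proof. by apply/rcosetsP; exists x; rewrite ?inE. Qed.

Definition orbit_act (H : {group gT}) (C : orbit_car H) (g : gT) : orbit_car H :=
  exist _ (val C :* g) (rcosets_mulr g (valP C)).

Lemma orbit_act1 H (C : orbit_car H) : orbit_act C 1 = C.
Proof. by apply: val_inj; rewrite /= rcoset1. Qed.

Lemma orbit_actM H (C : orbit_car H) g h :
  orbit_act C (g * h) = orbit_act (orbit_act C g) h.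
Proof. by apply: val_inj; rewrite /= rcosetM. Qed.

(* the transitive G-set G/H (realised as right cosets H\G) *)
Definition orbit (H : {group gT}) : gset gT :=
  @GSet gT (orbit_car H) (@orbit_act H) (@orbit_act1 H) (@orbit_actM H).

(* projection G/H -> G/K  (Hx |-> Kx), equivariant when H \subset K *)
Definition oproj (H K : {group gT}) (C : orbit H) : orbit K :=
  exist _ (K :* repr (val C)) (rcosets_mem K (repr (val C))).

(* conjugation G/H -> G/(H^g)  (Hx |-> g^-1 H x = H^g (g^-1 x)) *)
Definition oconj (H : {group gT}) (g : gT) (C : orbit H) : orbit (H :^ g)%G :=
  exist _ ((H :^ g) :* (g^-1 * repr (val C)))
        (rcosets_mem (H :^ g)%G (g^-1 * repr (val C))).

End Orbits.

Section Ideals.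
Variables (gT : finGroupType) (T : tambara gT).

Notation TG H := (tam T (orbit H)).

Definition ring_ideal (R : comPzRingType) (P : R -> Prop) :=
  P 0 /\ (forall a b, P a -> P b -> P (a + b)) /\
  (forall r a, P a -> P (r * a)).

Definition tfamily := forall H : {group gT}, TG H -> Prop.

Definition is_tideal (I : tfamily) :=
  (forall H, ring_ideal (I H)) /\
  (forall (H K : {group gT}), (H \subset K)%g ->
     forall a, I K a -> I H (tres (@oproj gT H K) a)) /\
  (forall (H K : {group gT}), (H \subset K)%g ->
     forall a, I H a -> I K (ttr (@oproj gT H K) a)) /\
  (forall (H K : {group gT}), (H \subset K)%g ->
     forall a, I H a -> I K (tnm (@oproj gT H K) a)) /\
  (* conjugation c_g : T(G/H) -> T(G/H^g) *)
  (forall (H : {group gT}) (g : gT),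
     forall a, I H a -> I (H :^ g)%G (ttr (@oconj gT H g) a)).

Definition tgen (S : tfamily) : tfamily := fun H x =>
  forall J, is_tideal J -> (forall K y, S K y -> J K y) -> J H x.

Arguments tgen : clear implicits.
Arguments tgen S H x : clear implicits.

Definition tfin_gen (I : tfamily) :=
  exists s : seq {H : {group gT} & TG H},
    forall H x, I H x <->
      tgen (fun K y => Stdlib.Lists.List.In (existT (fun K => TG K) K y) s) H x.

Definition tprod (I J : tfamily) : tfamily :=
  tgen (fun H y => exists a b, I H a /\ J H b /\ y = a * b).

End Ideals.
Arguments tgen {gT T} S H x.
Arguments tprod {gT T} I J H _.
Arguments tfamily {gT} T.

(* Main.v *)
Require Import Defs.
From mathcomp Require Import all_boot all_order all_algebra all_fingroup.
From HB Require Import structures.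
From Stdlib Require Import FunctionalExtensionality.
From mathcomp Require Import ring.
Set Implicit Arguments. Unset Strict Implicit. Unset Printing Implicit Defensive.
Import GRing.Theory.
Local Open Scope ring_scope.

Notation act := Defs.gact.
Notation orb := Defs.orbit.
Notation gA1 := Defs.gact1.
Notation gAM := Defs.gactM.

Section Basic.
Variables (gT : finGroupType) (T : tambara gT).

Lemma eq_comp (X Y Z : gset gT) (f : X -> Y) (g : Y -> Z) :
  equivariant f -> equivariant g -> equivariant (g \o f).
Proof. by move=> ef eg x h; rewrite /= ef eg. Qed.

Lemma equiv_id (X : gset gT) : equivariant (@id X).
Proof. by []. Qed.

Lemma tres_ext (X Y : gset gT) (f g : X -> Y) : f =1 g -> tres (t:=T) f = tres g.
Proof. by move=> /functional_extensionality ->. Qed.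
Lemma ttr_ext (X Y : gset gT) (f g : X -> Y) : f =1 g -> ttr (t:=T) f = ttr g.
Proof. by move=> /functional_extensionality ->. Qed.
Lemma tnm_ext (X Y : gset gT) (f g : X -> Y) : f =1 g -> tnm (t:=T) f = tnm g.
Proof. by move=> /functional_extensionality ->. Qed.

Section Maps.
Variables (X Y : gset gT) (f : X -> Y) (ef : equivariant f).
Lemma tres0 : tres (t:=T) f 0 = 0. Proof. by case: (tres_rmorph T ef). Qed.
Lemma tres1 : tres (t:=T) f 1 = 1. Proof. by case: (tres_rmorph T ef) => _ []. Qed.
Lemma tresD a b : tres (t:=T) f (a + b) = tres f a + tres f b.
Proof. by case: (tres_rmorph T ef) => _ [] _ []. Qed.
Lemma tresM a b : tres (t:=T) f (a * b) = tres f a * tres f b.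
Proof. by case: (tres_rmorph T ef) => _ [] _ []. Qed.
Lemma ttr0 : ttr (t:=T) f 0 = 0. Proof. by case: (ttr_additive T ef). Qed.
Lemma ttrD a b : ttr (t:=T) f (a + b) = ttr f a + ttr f b.
Proof. by case: (ttr_additive T ef). Qed.
Lemma tnm1 : tnm (t:=T) f 1 = 1. Proof. by case: (tnm_multiplicative T ef). Qed.
Lemma tnmM a b : tnm (t:=T) f (a * b) = tnm f a * tnm f b.
Proof. by case: (tnm_multiplicative T ef). Qed.
End Maps.

Lemma tam_empty0 (X : gset gT) : #|X| = 0%N -> forall a : tam T X, a = 0.
Proof. by move=> /(tam_empty T) e a; rewrite -[a]mulr1 e mulr0. Qed.

Definition gempty : gset gT :=
  @GSet gT (void : finType) (fun x _ => x) (fun _ => erefl) (fun _ _ _ => erefl).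

Definition from_empty (X : gset gT) : gempty -> X := fun v => match v with end.
Lemma from_empty_eq (X : gset gT) : equivariant (@from_empty X).
Proof. by case. Qed.

Lemma gempty_card : #|gempty| = 0%N.
Proof. by rewrite /= card_void. Qed.

Lemma ttr_empty (X : gset gT) (a : tam T gempty) : ttr (@from_empty X) a = 0.
Proof. by rewrite (tam_empty0 gempty_card a) (ttr0 (@from_empty_eq X)). Qed.
Lemma tnm_empty (X : gset gT) (a : tam T gempty) : tnm (@from_empty X) a = 1.
Proof.
have -> : a = 1 by rewrite (tam_empty0 gempty_card a) (tam_empty0 gempty_card 1).
by rewrite (tnm1 (@from_empty_eq X)).
Qed.

Section Iso.
Variables (X Y : gset gT) (psi : X -> Y) (chi : Y -> X).
Hypotheses (epsi : equivariant psi) (echi : equivariant chi)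
  (K1 : cancel psi chi) (K2 : cancel chi psi).

Lemma iso_pullback : is_pullback psi (@id Y) chi (@id Y).
Proof.
split=> [u|x z e]; first by rewrite /= K2.
exists z; split=> [|u [e1 e2]]; last by [].
by split=> //; rewrite -e K1.
Qed.

Lemma ttr_iso a : ttr (t:=T) psi a = tres chi a.
Proof.
have := ttr_pullback (t:=T) epsi (@equiv_id _) echi (@equiv_id _) iso_pullback a.
by rewrite tres_id ttr_id.
Qed.
Lemma tnm_iso a : tnm (t:=T) psi a = tres chi a.
Proof.
have := tnm_pullback (t:=T) epsi (@equiv_id _) echi (@equiv_id _) iso_pullback a.
by rewrite tres_id tnm_id.
Qed.
End Iso.

Section Coprod.
Variables (X Y Z : gset gT) (i : X -> Z) (j : Y -> Z).
Hypotheses (ei : equivariant i) (ej : equivariant j) (cp : is_coproduct i j).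

Lemma cp_self_pullback : is_pullback i i (@id X) (@id X).
Proof.
case: cp => ii _; split=> // x z /ii ->; exists z; by split=> [|u []].
Qed.

Lemma cp_cross_pullback : is_pullback i j (@from_empty X) (@from_empty Y).
Proof.
case: cp => _ [_ [d _]]; split=> [[]|x z /d []].
Qed.

Lemma res_tr_self a : tres (t:=T) i (ttr i a) = a.
Proof.
by have := ttr_pullback (t:=T) ei ei (@equiv_id _) (@equiv_id _) cp_self_pullback a;
  rewrite tres_id ttr_id.
Qed.
Lemma res_nm_self a : tres (t:=T) i (tnm i a) = a.
Proof.
by have := tnm_pullback (t:=T) ei ei (@equiv_id _) (@equiv_id _) cp_self_pullback a;
  rewrite tres_id tnm_id.
Qed.
Lemma res_tr_cross a : tres (t:=T) j (ttr i a) = 0.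
Proof.
by rewrite (ttr_pullback (t:=T) ei ej (@from_empty_eq _) (@from_empty_eq _)
  cp_cross_pullback a) ttr_empty.
Qed.
Lemma res_nm_cross a : tres (t:=T) j (tnm i a) = 1.
Proof.
by rewrite (tnm_pullback (t:=T) ei ej (@from_empty_eq _) (@from_empty_eq _)
  cp_cross_pullback a) tnm_empty.
Qed.
End Coprod.

Lemma is_coproduct_sym (X Y Z : gset gT) (i : X -> Z) (j : Y -> Z) :
  is_coproduct i j -> is_coproduct j i.
Proof.
case=> ii [ij [d c]]; split=> //; split=> //; split=> [y x e|z]; first exact: (d x y).
by case: (c z); [right|left].
Qed.

Section Coprod2.
Variables (X Y Z : gset gT) (i : X -> Z) (j : Y -> Z).
Hypotheses (ei : equivariant i) (ej : equivariant j) (cp : is_coproduct i j).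

Lemma cp_inj (u v : tam T Z) : tres i u = tres i v -> tres j u = tres j v -> u = v.
Proof.
move=> e1 e2; case: (tam_coprod T ei ej cp) => h K1 _.
by rewrite -(K1 u) -(K1 v) /= e1 e2.
Qed.

Lemma cp_tr_decomp (c : tam T Z) : c = ttr i (tres i c) + ttr j (tres j c).
Proof.
have cp' := is_coproduct_sym cp.
apply: cp_inj.
  by rewrite (tresD ei) (res_tr_self ei cp) (res_tr_cross ej ei cp') addr0.
by rewrite (tresD ej) (res_tr_self ej cp') (res_tr_cross ei ej cp) add0r.
Qed.

Lemma cp_nm_decomp (c : tam T Z) : c = tnm i (tres i c) * tnm j (tres j c).
Proof.
have cp' := is_coproduct_sym cp.
apply: cp_inj.
  by rewrite (tresM ei) (res_nm_self ei cp) (res_nm_cross ej ei cp') mulr1.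
by rewrite (tresM ej) (res_nm_self ej cp') (res_nm_cross ei ej cp) mul1r.
Qed.

Lemma cp_ttr (W : gset gT) (w : Z -> W) (ew : equivariant w) (c : tam T Z) :
  ttr w c = ttr (w \o i) (tres i c) + ttr (w \o j) (tres j c).
Proof.
by rewrite {1}(cp_tr_decomp c) (ttrD ew) -(ttr_comp ei ew) -(ttr_comp ej ew).
Qed.

Lemma cp_tnm (W : gset gT) (w : Z -> W) (ew : equivariant w) (c : tam T Z) :
  tnm w c = tnm (w \o i) (tres i c) * tnm (w \o j) (tres j c).
Proof.
by rewrite {1}(cp_nm_decomp c) (tnmM ew) -(tnm_comp ei ew) -(tnm_comp ej ew).
Qed.
End Coprod2.

End Basic.

Section Constr.
Variables (gT : finGroupType) (T : tambara gT).

Definition surj (X Y : gset gT) (f : X -> Y) := forall y, exists x, f x = y.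

Section PB.
Variables (X Y Z : gset gT) (f : X -> Y) (g : Z -> Y).
Hypotheses (ef : equivariant f) (eg : equivariant g).

Definition pb_car : finType := {u : X * Z | f u.1 == g u.2}.
Lemma pb_act_proof (u : pb_car) h :
  f (act (val u).1 h) == g (act (val u).2 h).
Proof. by rewrite ef eg (eqP (valP u)). Qed.
Definition pb_act (u : pb_car) h : pb_car :=
  exist _ (act (val u).1 h, act (val u).2 h) (pb_act_proof u h).
Lemma pb_act1 u : pb_act u 1%g = u.
Proof. by apply: val_inj; rewrite /= !gA1 -surjective_pairing. Qed.
Lemma pb_actM u a b : pb_act u (a * b)%g = pb_act (pb_act u a) b.
Proof. by apply: val_inj; rewrite /= !gAM. Qed.
Definition pbG : gset gT := @GSet gT pb_car pb_act pb_act1 pb_actM.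
Definition pb1 (u : pbG) : X := (val u).1.
Definition pb2 (u : pbG) : Z := (val u).2.
Lemma pb1_eq : equivariant pb1. Proof. by []. Qed.
Lemma pb2_eq : equivariant pb2. Proof. by []. Qed.
Lemma pb_is : is_pullback f g pb1 pb2.
Proof.
split=> [u|x z e]; first exact: (eqP (valP u)).
have ez : f (x, z).1 == g (x, z).2 by apply/eqP.
exists (exist _ (x, z) ez); split=> // u [e1 e2].
by apply: val_inj; rewrite /= -e1 -e2 -surjective_pairing.
Qed.
Lemma pb2_surj : surj f -> surj pb2.
Proof.
move=> sf z; case: (sf (g z)) => x e.
have ez : f (x, z).1 == g (x, z).2 by apply/eqP.
by exists (exist _ (x, z) ez).
Qed.
End PB.

Lemma pb_surj (X Y Z P : gset gT) (f : X -> Y) (g : Z -> Y) (p1 : P -> X) (p2 : P -> Z) :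
  is_pullback f g p1 p2 -> surj f -> surj p2.
Proof.
case=> _ h sf z; case: (sf (g z)) => x e; case: (h x z e) => u [[_ e2] _].
by exists u.
Qed.

Section Sum.
Variables (X Y : gset gT).
Definition sum_act (u : (X + Y)%type) h : (X + Y)%type :=
  match u with inl x => inl (act x h) | inr y => inr (act y h) end.
Lemma sum_act1 u : sum_act u 1%g = u.
Proof. by case: u => x /=; rewrite gA1. Qed.
Lemma sum_actM u a b : sum_act u (a * b)%g = sum_act (sum_act u a) b.
Proof. by case: u => x /=; rewrite gAM. Qed.
Definition sumG : gset gT := @GSet gT (X + Y)%type sum_act sum_act1 sum_actM.
Definition sinl (x : X) : sumG := inl x.
Definition sinr (y : Y) : sumG := inr y.
Lemma sinl_eq : equivariant sinl. Proof. by []. Qed.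
Lemma sinr_eq : equivariant sinr. Proof. by []. Qed.
Lemma sum_cp : is_coproduct sinl sinr.
Proof.
split; first by move=> ? ? [].
split; first by move=> ? ? [].
by split=> [//|[x|y]]; [left; exists x | right; exists y].
Qed.
Lemma sum_exists (c1 : tam T X) (c2 : tam T Y) :
  exists c : tam T sumG, tres sinl c = c1 /\ tres sinr c = c2.
Proof.
case: (tam_coprod T sinl_eq sinr_eq sum_cp) => h _ K2.
exists (h (c1, c2)); have := K2 (c1, c2); by case.
Qed.
End Sum.

Section SumMap.
Variables (V1 V2 W1 W2 : gset gT) (v1 : V1 -> W1) (v2 : V2 -> W2).
Definition sum_map (u : sumG V1 V2) : sumG W1 W2 :=
  match u with inl x => inl (v1 x) | inr y => inr (v2 y) end.
Lemma sum_map_eq : equivariant v1 -> equivariant v2 -> equivariant sum_map.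
Proof. by move=> e1 e2 [x|y] h /=; rewrite ?e1 ?e2. Qed.
Lemma sum_map_surj : surj v1 -> surj v2 -> surj sum_map.
Proof.
move=> s1 s2 [x|y]; [case: (s1 x) => u <-; by exists (inl u)
  | case: (s2 y) => u <-; by exists (inr u)].
Qed.
Lemma sum_map_pbl : is_pullback sum_map (@sinl W1 W2) (@sinl V1 V2) v1.
Proof.
split=> // [[x|y]] // z [<-]; exists x; by split=> // u [[]].
Qed.
Lemma sum_map_pbr : is_pullback sum_map (@sinr W1 W2) (@sinr V1 V2) v2.
Proof.
split=> // [[x|y]] // z [<-]; exists y; by split=> // u [[]].
Qed.
End SumMap.

Section SumCase.
Variables (X1 X2 Y : gset gT) (w1 : X1 -> Y) (w2 : X2 -> Y).
Definition sum_case (u : sumG X1 X2) : Y :=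
  match u with inl x => w1 x | inr y => w2 y end.
Lemma sum_case_eq : equivariant w1 -> equivariant w2 -> equivariant sum_case.
Proof. by move=> e1 e2 [x|y] h /=; rewrite ?e1 ?e2. Qed.
End SumCase.

End Constr.
Arguments sinl {gT X Y}. Arguments sinr {gT X Y}.
Arguments sinl_eq {gT X Y}. Arguments sinr_eq {gT X Y}.
Arguments sum_cp {gT X Y}.
Arguments equiv_id {gT X}.

Section Expo.
Variables (gT : finGroupType) (T : tambara gT).

Lemma actK (X : gset gT) (x : X) g : act (act x g) g^-1 = x.
Proof. by rewrite -gAM mulgV gA1. Qed.
Lemma actVK (X : gset gT) (x : X) g : act (act x g^-1) g = x.
Proof. by rewrite -gAM mulVg gA1. Qed.

Section E.
Variables (X Y A : gset gT) (f : X -> Y) (p : A -> X).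
Hypotheses (ef : equivariant f) (ep : equivariant p).

Definition sec_ok (u : Y * {ffun X -> option A}) :=
  [forall x, if f x == u.1 then (if u.2 x is Some a then p a == x else false)
             else u.2 x == None].

Definition Pi_car : finType := {u : Y * {ffun X -> option A} | sec_ok u}.

Definition sact (s : {ffun X -> option A}) g : {ffun X -> option A} :=
  [ffun x => omap (fun a => act a g) (s (act x g^-1))].

Lemma sec_okP (u : Pi_car) x :
  if f x == (val u).1 then (if (val u).2 x is Some a then p a == x else false)
  else (val u).2 x == None.
Proof. exact: (forallP (valP u) x). Qed.

Lemma Pi_act_proof (u : Pi_car) g : sec_ok (act (val u).1 g, sact (val u).2 g).
Proof.
apply/forallP => x /=; rewrite ffunE.
have := sec_okP u (act x g^-1); rewrite ef.
have -> : (act (f x) g^-1 == (val u).1) = (f x == act (val u).1 g).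
  apply/eqP/eqP=> [<-|->]; by rewrite ?actVK ?actK.
case: (f x == _).
  by case: ((val u).2 _) => //= a /eqP e; rewrite ep e actVK.
by move/eqP ->.
Qed.

Definition Pi_act (u : Pi_car) g : Pi_car :=
  exist _ (act (val u).1 g, sact (val u).2 g) (Pi_act_proof u g).

Lemma Pi_act1 u : Pi_act u 1%g = u.
Proof.
apply: val_inj; case: u => [[y s] h] /=; rewrite gA1; congr (_, _).
by apply/ffunP=> x; rewrite ffunE invg1 gA1; case: (s x) => //= a; rewrite gA1.
Qed.
Lemma Pi_actM u a b : Pi_act u (a * b)%g = Pi_act (Pi_act u a) b.
Proof.
apply: val_inj; case: u => [[y s] h] /=; rewrite gAM; congr (_, _).
apply/ffunP=> x; rewrite !ffunE invMg gAM; case: (s _) => //= c; by rewrite gAM.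
Qed.
Definition PiG : gset gT := @GSet gT Pi_car Pi_act Pi_act1 Pi_actM.
Definition qP (u : PiG) : Y := (val u).1.
Lemma qP_eq : equivariant qP. Proof. by []. Qed.

Definition Z_car : finType := {u : A * PiG | (val u.2).2 (p u.1) == Some u.1}.
Lemma Z_act_proof (u : Z_car) g :
  (val (act (val u).2 g)).2 (p (act (val u).1 g)) == Some (act (val u).1 g).
Proof.
rewrite /= ffunE ep actK; by rewrite (eqP (valP u)).
Qed.
Definition Z_act (u : Z_car) g : Z_car :=
  exist _ (act (val u).1 g, act (val u).2 g) (Z_act_proof u g).
Lemma Z_act1 u : Z_act u 1%g = u.
Proof. apply: val_inj; case: u => [[a w] h] /=; rewrite gA1; congr (_, _); exact: (Pi_act1 w). Qed.
Lemma Z_actM u a b : Z_act u (a * b)%g = Z_act (Z_act u a) b.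
Proof. apply: val_inj; rewrite /= gAM; congr (_, _); exact: (Pi_actM _ a b). Qed.
Definition ZG : gset gT := @GSet gT Z_car Z_act Z_act1 Z_actM.
Definition fP (z : ZG) : PiG := (val z).2.
Definition eP (z : ZG) : A := (val z).1.
Lemma fP_eq : equivariant fP. Proof. by []. Qed.
Lemma eP_eq : equivariant eP. Proof. by []. Qed.

Lemma expo_is : is_exponential f p qP fP eP.
Proof.
split; [|split].
- move=> z; have := sec_okP (fP z) (p (eP z)); rewrite (eqP (valP z)).
  by case: eqP.
- move=> x u e; have := sec_okP u x; rewrite e eqxx.
  case E: ((val u).2 x) => [a|] // /eqP pa.
  have ha : (val (a, u).2).2 (p (a, u).1) == Some (a, u).1 by rewrite /= pa E.
  exists (exist _ (a, u) ha); split=> // z [e1 e2].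
  apply: val_inj.
  have hz := eqP (valP z).
  change ((val (fP z)).2 (p (eP z)) = Some (eP z)) in hz.
  rewrite e2 e1 E in hz; case: hz => hz.
  rewrite /= hz -e2; by case: z {e1 e2 hz} => [[]].
- move=> y s hs.
  pose s0 := [ffun x => if f x == y then s x else None].
  have ok : sec_ok (y, s0).
    apply/forallP=> x /=; rewrite ffunE; case: eqP => // /hs [a -> /eqP]; done.
  exists (exist _ (y, s0) ok); split.
    split=> // z ez.
    have hz := eqP (valP z).
    change ((val (fP z)).2 (p (eP z)) = Some (eP z)) in hz.
    rewrite ez /= ffunE in hz; by move: hz; case: (f _ == y).
  move=> [[y' s'] hok] [qu hu]; apply: val_inj => /=.
  rewrite /qP /= in qu; subst y'; congr (_, _).
  apply/ffunP=> x; rewrite ffunE.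
  have := forallP hok x; rewrite /=.
  case: eqP => [fx|_ /eqP //].
  case E: (s' x) => [a|] // /eqP pa.
  pose u : PiG := exist _ (y, s') hok.
  have ha : (val (a, u).2).2 (p (a, u).1) == Some (a, u).1 by rewrite /= pa E.
  by have := hu (exist _ (a, u) ha) erefl; rewrite /eP /= pa.
Qed.

Lemma fP_surj : surj f -> surj fP.
Proof.
move=> sf u; case: (sf (qP u)) => x e.
have := sec_okP u x; rewrite -/(qP u) e eqxx.
case E: ((val u).2 x) => [a|] // /eqP pa.
have ha : (val (a, u).2).2 (p (a, u).1) == Some (a, u).1 by rewrite /= pa E.
by exists (exist _ (a, u) ha).
Qed.

End E.
End Expo.

Section Frob.
Variables (gT : finGroupType) (T : tambara gT).

Definition codiag (X : gset gT) : sumG X X -> X := sum_case (@id X) (@id X).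
Lemma codiag_eq (X : gset gT) : equivariant (@codiag X).
Proof. exact: sum_case_eq. Qed.
Arguments codiag {X}. Arguments codiag_eq {X}.

Lemma tnm_codiag (X : gset gT) (c : tam T (sumG X X)) :
  tnm (@codiag X) c = tres sinl c * tres sinr c.
Proof.
rewrite (cp_tnm sinl_eq sinr_eq sum_cp codiag_eq).
by rewrite !tnm_id.
Qed.

Section F.
Variables (X Y : gset gT) (f : X -> Y) (ef : equivariant f).

Definition fr_p : sumG X Y -> sumG Y Y := sum_map f (@id Y).
Definition fr_e : sumG X X -> sumG X Y := sum_map (@id X) f.
Lemma fr_p_eq : equivariant fr_p. Proof. exact: sum_map_eq. Qed.
Lemma fr_e_eq : equivariant fr_e. Proof. exact: sum_map_eq. Qed.

Lemma fr_expo : is_exponential (@codiag Y) fr_p f (@codiag X) fr_e.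
Proof.
split; [|split].
- by case.
- move=> [y|y] x /= e.
  + exists (inl x); split; first by rewrite /= e.
    by move=> [z|z] /= [h1 h2]; [rewrite h2 | discriminate h1].
  + exists (inr x); split; first by rewrite /= e.
    by move=> [z|z] /= [h1 h2]; [discriminate h1 | rewrite h2].
- move=> y s hs.
  case: (hs (inl y) erefl) => [[x|y'] sx //= [fx]].
  case: (hs (inr y) erefl) => [[x'|y'] sy //= [ey]].
  exists x; split.
    split=> // -[z|z] /= ->; first by rewrite fx sx.
    by rewrite fx sy ey.
  move=> x2 [fx2 h]; have := h (inl x2) erefl; rewrite /= fx2 sx; by case.
Qed.

Lemma frobenius (a : tam T X) (b : tam T Y) :
  ttr f a * b = ttr f (a * tres f b).
Proof.
case: (sum_exists a b) => c [ca cb].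
have := tdistr codiag_eq fr_p_eq ef codiag_eq fr_e_eq fr_expo c.
rewrite !tnm_codiag.
rewrite (ttr_pullback (sum_map_eq ef equiv_id) sinl_eq sinl_eq ef
  (sum_map_pbl f (@id Y))).
rewrite (ttr_pullback (sum_map_eq ef equiv_id) sinr_eq sinr_eq
  equiv_id (sum_map_pbr f (@id Y))) ttr_id.
rewrite -(tres_comp sinl_eq fr_e_eq) -(tres_comp sinr_eq fr_e_eq).
rewrite (@tres_ext _ T _ _ (fr_e \o sinl) sinl) //.
rewrite (@tres_ext _ T _ _ (fr_e \o sinr) (sinr \o f)) //.
by rewrite (tres_comp ef sinr_eq) ca cb.
Qed.

End F.
End Frob.

Section OrbBasic.
Variable gT : finGroupType.

Definition obase (S : {group gT}) : orb S := exist _ (S :* 1)%g (rcosets_mem S 1%g).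

Lemma orb_val (S : {group gT}) (C : orb S) : exists x, val C = (S :* x)%g.
Proof. by case/rcosetsP: (valP C) => x _ ->; exists x. Qed.

Lemma orb_elt (S : {group gT}) (C : orb S) : C = act (obase S) (repr (val C)).
Proof.
apply: val_inj; case: (orb_val C) => x e.
by rewrite /= rcoset1 e rcoset_repr.
Qed.

Lemma equiv_orb (S : {group gT}) (X : gset gT) (phi : orb S -> X) :
  equivariant phi -> forall C, phi C = act (phi (obase S)) (repr (val C)).
Proof. by move=> e C; rewrite -e -orb_elt. Qed.

Lemma orb_sum_fact (S : {group gT}) (V1 V2 : gset gT) (phi : orb S -> sumG V1 V2) :
  equivariant phi ->
  (exists2 phi1 : orb S -> V1, equivariant phi1 & forall C, phi C = sinl (phi1 C)) \/
  (exists2 phi2 : orb S -> V2, equivariant phi2 & forall C, phi C = sinr (phi2 C)).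
Proof.
move=> e; case E: (phi (obase S)) => [v|v].
- left; exists (fun C => act v (repr (val C))) => [C g|C].
    have := e C g; rewrite (equiv_orb e (act C g)) (equiv_orb e C) E /=.
    by case.
  by rewrite (equiv_orb e C) E.
- right; exists (fun C => act v (repr (val C))) => [C g|C].
    have := e C g; rewrite (equiv_orb e (act C g)) (equiv_orb e C) E /=.
    by case.
  by rewrite (equiv_orb e C) E.
Qed.
End OrbBasic.

Section NF.
Variables (gT : finGroupType) (T : tambara gT).
Variable B : forall S : {group gT}, tam T (orb S) -> Prop.

Definition Gen (V : gset gT) (g : tam T V) :=
  forall (S : {group gT}) (phi : orb S -> V), equivariant phi -> B (tres phi g).

Lemma Gen_res (V V' : gset gT) (h : V' -> V) (g : tam T V) :
  equivariant h -> Gen g -> Gen (tres h g).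
Proof. by move=> eh hg S phi ephi; rewrite -tres_comp //; apply: hg; apply: eq_comp. Qed.

Definition NF (X : gset gT) (a : tam T X) :=
  exists (W V : gset gT) (w : W -> X) (v : V -> W) (r : tam T W) (g : tam T V),
    [/\ equivariant w, equivariant v, surj v, Gen g & a = ttr w (r * tnm v g)].

Lemma NF0 (X : gset gT) : NF (0 : tam T X).
Proof.
exists (gempty gT), (gempty gT), (@from_empty _ X), id, 0, 0; split=> //.
all: try (by case).
- by move=> S phi _; case: (phi (obase S)).
- by rewrite ttr_empty.
Qed.

Lemma NF_add (X : gset gT) (a b : tam T X) : NF a -> NF b -> NF (a + b).
Proof.
move=> [W1 [V1 [w1 [v1 [r1 [g1 [ew1 ev1 sv1 hg1 ->]]]]]]].
move=> [W2 [V2 [w2 [v2 [r2 [g2 [ew2 ev2 sv2 hg2 ->]]]]]]].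
case: (sum_exists r1 r2) => r [rl rr].
case: (sum_exists g1 g2) => g [gl gr].
have ew : equivariant (sum_case w1 w2) by apply: sum_case_eq.
have ev : equivariant (sum_map v1 v2) by apply: sum_map_eq.
exists (sumG W1 W2), (sumG V1 V2), (sum_case w1 w2), (sum_map v1 v2), r, g; split=> //.
- exact: sum_map_surj.
- move=> S phi ephi; case: (orb_sum_fact ephi) => [[phi1 e1 h]|[phi2 e2 h]].
    rewrite (@tres_ext _ T _ _ phi (sinl \o phi1)) // (tres_comp e1 sinl_eq) gl.
    exact: hg1.
  rewrite (@tres_ext _ T _ _ phi (sinr \o phi2)) // (tres_comp e2 sinr_eq) gr.
  exact: hg2.
- rewrite (cp_ttr sinl_eq sinr_eq sum_cp ew).
  rewrite !(tresM sinl_eq) !(tresM sinr_eq) rl rr.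
  rewrite (tnm_pullback ev sinl_eq sinl_eq ev1 (sum_map_pbl v1 v2)) gl.
  rewrite (tnm_pullback ev sinr_eq sinr_eq ev2 (sum_map_pbr v1 v2)) gr.
  by rewrite (@ttr_ext _ T _ _ (sum_case w1 w2 \o sinl) w1) //
             (@ttr_ext _ T _ _ (sum_case w1 w2 \o sinr) w2).
Qed.

Lemma NF_mul (X : gset gT) (t a : tam T X) : NF a -> NF (t * a).
Proof.
move=> [W [V [w [v [r [g [ew ev sv hg ->]]]]]]].
exists W, V, w, v, (tres w t * r), g; split=> //.
by rewrite mulrC frobenius // mulrC mulrA.
Qed.

Lemma NF_tr (X Y : gset gT) (h : X -> Y) (a : tam T X) :
  equivariant h -> NF a -> NF (ttr h a).
Proof.
move=> eh [W [V [w [v [r [g [ew ev sv hg ->]]]]]]].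
exists W, V, (h \o w), v, r, g; split=> //; first exact: eq_comp.
by rewrite ttr_comp.
Qed.

Lemma NF_res (X Y : gset gT) (h : Y -> X) (a : tam T X) :
  equivariant h -> NF a -> NF (tres h a).
Proof.
move=> eh [W [V [w [v [r [g [ew ev sv hg ->]]]]]]].
pose P := pbG ew eh.
have e1 : equivariant (@pb1 _ _ _ _ _ _ ew eh) by apply: pb1_eq.
pose Q := pbG ev e1.
have eq1 : equivariant (@pb1 _ _ _ _ _ _ ev e1) by apply: pb1_eq.
have eq2 : equivariant (@pb2 _ _ _ _ _ _ ev e1) by apply: pb2_eq.
exists P, Q, (@pb2 _ _ _ _ _ _ ew eh), (@pb2 _ _ _ _ _ _ ev e1),
  (tres (@pb1 _ _ _ _ _ _ ew eh) r), (tres (@pb1 _ _ _ _ _ _ ev e1) g); split.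
- exact: pb2_eq.
- exact: pb2_eq.
- exact: pb2_surj.
- exact: Gen_res.
rewrite (ttr_pullback ew eh e1 (@pb2_eq _ _ _ _ _ _ ew eh) (pb_is ew eh)).
rewrite (tresM e1); congr (ttr _ (_ * _)).
exact: (tnm_pullback ev e1 eq1 eq2 (pb_is ev e1)).
Qed.

Lemma NF_nm (X Y : gset gT) (h : X -> Y) (a : tam T X) :
  equivariant h -> surj h -> NF a -> NF (tnm h a).
Proof.
move=> eh sh [W [V [w [v [r [g [ew ev sv hg ->]]]]]]].
have eqP' := @qP_eq _ _ _ _ _ _ eh ew.
have efP := @fP_eq _ _ _ _ _ _ eh ew.
have eeP := @eP_eq _ _ _ _ _ _ eh ew.
pose Q := pbG ev eeP.
have eq1 : equivariant (@pb1 _ _ _ _ _ _ ev eeP) by apply: pb1_eq.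
have eq2 : equivariant (@pb2 _ _ _ _ _ _ ev eeP) by apply: pb2_eq.
exists (PiG eh ew), Q, (@qP _ _ _ _ _ _ eh ew),
  (@fP _ _ _ _ _ _ eh ew \o @pb2 _ _ _ _ _ _ ev eeP),
  (tnm (@fP _ _ _ _ _ _ eh ew) (tres (@eP _ _ _ _ _ _ eh ew) r)),
  (tres (@pb1 _ _ _ _ _ _ ev eeP) g); split=> //.
- move=> u; case: (fP_surj sh u) => z <-.
  by case: (pb2_surj ev eeP sv z) => y <-; exists y.
- exact: Gen_res.
rewrite (tdistr eh ew eqP' efP eeP (expo_is eh ew)).
rewrite (tresM eeP) (tnmM efP) (tnm_comp eq2 efP); congr (ttr _ (_ * tnm _ _)).
exact: (tnm_pullback ev eeP eq1 eq2 (pb_is ev eeP)).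
Qed.

Lemma NF_base (X : gset gT) (x : tam T X) : Gen x -> NF x.
Proof.
move=> hx; exists X, X, id, id, 1, x; split=> //.
- by move=> y; exists y.
- by rewrite mul1r tnm_id ttr_id.
Qed.

End NF.

Section OrbMaps.
Variable gT : finGroupType.
Local Open Scope group_scope.

Lemma same_coset (H : {group gT}) (z y y' : gT) :
  y \in H :* z -> y' \in H :* z -> y' * y^-1 \in H.
Proof.
rewrite !mem_rcoset => hy hy'.
have := groupM hy' (groupVr hy).
by rewrite invMg invgK mulgA mulgKV.
Qed.

Lemma repr_in (H : {group gT}) (C : orb H) : repr (val C) \in val C.
Proof. by case: (orb_val C) => x ->; exact: mem_repr_rcoset. Qed.

Lemma in_act (H : {group gT}) (C : orb H) y g :
  y \in val C -> y * g \in val (act C g).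
Proof. by rewrite /= mem_rcoset mulgK. Qed.

Lemma oproj_val (H K : {group gT}) (C : orb H) y :
  H \subset K -> y \in val C -> val (oproj K C) = K :* y.
Proof.
move=> sHK; case: (orb_val C) => x e; rewrite e => hy /=.
have hr : repr (val C) \in H :* x by rewrite -e repr_in.
have := rcosetS x H K; rewrite sHK => /subsetP s.
by rewrite (rcoset_eqP (s _ hr)) (rcoset_eqP (s _ hy)).
Qed.

Lemma oproj_eq (H K : {group gT}) : H \subset K -> equivariant (@oproj gT H K).
Proof.
move=> sHK C g; apply: val_inj.
rewrite (oproj_val sHK (in_act g (repr_in C))) /=.
by rewrite rcosetM.
Qed.

Lemma oproj_surj (H K : {group gT}) : H \subset K -> surj (@oproj gT H K).
Proof.
move=> sHK D; case: (orb_val D) => x e.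
exists (exist _ (H :* x) (rcosets_mem H x)); apply: val_inj.
by rewrite e (oproj_val (y := x) sHK) //= rcoset_refl.
Qed.

Lemma oconj_val (H : {group gT}) g (C : orb H) y :
  y \in val C -> val (oconj g C) = (H :^ g) :* (g^-1 * y).
Proof.
case: (orb_val C) => x e; rewrite e => hy /=.
have hr : repr (val C) \in H :* x by rewrite -e repr_in.
apply/rcoset_eqP; rewrite mem_rcoset invMg invgK mulgA.
rewrite -[_ * _ * g](mulgA _ _ g) -(mulgA (g^-1)).
have := same_coset hy hr; rewrite -(memJ_conjg _ g) /conjg.
by rewrite !mulgA.
Qed.

Lemma oconj_eq (H : {group gT}) g : equivariant (@oconj gT H g).
Proof.
move=> C h; apply: val_inj.
rewrite (oconj_val g (in_act h (repr_in C))) /=.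
by rewrite -rcosetM mulgA.
Qed.

End OrbMaps.

Section Classif.
Variables (gT : finGroupType) (T : tambara gT).
Local Open Scope group_scope.

Lemma orb_map_eq (S : {group gT}) (X : gset gT) (phi psi : orb S -> X) :
  equivariant phi -> equivariant psi -> phi (obase S) = psi (obase S) -> phi =1 psi.
Proof. by move=> e1 e2 e C; rewrite (equiv_orb e1) (equiv_orb e2) e. Qed.

Lemma base_in (S : {group gT}) : 1 \in val (obase S).
Proof. exact: rcoset_refl. Qed.

Lemma orb_eqv (S : {group gT}) (C D : orb S) : val C = val D -> C = D.
Proof. exact: val_inj. Qed.

Variable I : tfamily T.
Hypothesis hI : is_tideal I.

Section Phi.
Variables (K H : {group gT}) (phi : orb K -> orb H).
Hypothesis ephi : equivariant phi.

Let g0 := repr (val (phi (obase K))).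
Let A := (H :^ g0)%G.
Let B' := (A :^ g0^-1)%G.

Lemma phi_val : val (phi (obase K)) = H :* g0.
Proof. by case: (orb_val (phi (obase K))) => x e; rewrite /g0 e rcoset_repr. Qed.

Lemma sKA : K \subset A.
Proof.
apply/subsetP=> k hk.
have hb : act (obase K) k = obase K.
  by apply: val_inj; rewrite /= rcoset1 rcoset_id // rcoset1.
have := ephi (obase K) k; rewrite hb => /(congr1 val).
rewrite /= phi_val -rcosetM => /esym /rcoset_eqP.
rewrite mem_rcoset mem_conjg /conjg invgK.
by rewrite mulgA.
Qed.

Lemma sB'H : B' \subset H.
Proof. by rewrite /B' /A /= conjsgK. Qed.
Lemma sHB' : H \subset B'.
Proof. by rewrite /B' /A /= conjsgK. Qed.
Lemma sB'A : (B' :^ g0)%G \subset A.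
Proof. by rewrite /B' /= conjsgKV. Qed.

Let c' := @oconj gT A g0^-1.
Let chi := @oproj gT _ A \o @oconj gT B' g0.

Lemma ec' : equivariant c'. Proof. exact: oconj_eq. Qed.
Lemma echi : equivariant chi.
Proof. apply: eq_comp; [exact: oconj_eq | exact: oproj_eq sB'A]. Qed.

Lemma c'_val : val (c' (obase A)) = B' :* g0.
Proof. by rewrite (oconj_val _ (base_in A)) invgK mulg1. Qed.

Lemma chiK : cancel c' chi.
Proof.
apply: (orb_map_eq (eq_comp ec' echi) (@equiv_id _ _)); apply: val_inj.
have h1 : g0 \in val (c' (obase A)) by rewrite c'_val rcoset_refl.
have h2 : 1 \in val (@oconj gT B' g0 (c' (obase A))).
  by rewrite (oconj_val _ h1) mulVg rcoset_refl.
change (val (@oproj gT _ A (@oconj gT B' g0 (c' (obase A)))) = A :* 1).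
by rewrite (oproj_val sB'A h2).
Qed.

Lemma chiK' : cancel chi c'.
Proof.
apply: (orb_map_eq (eq_comp echi ec') (@equiv_id _ _)); apply: val_inj.
have h1 : g0^-1 \in val (oconj g0 (obase B')).
  by rewrite (oconj_val _ (base_in B')) mulg1 rcoset_refl.
have h2 : g0^-1 \in val (chi (obase B')).
  change (g0^-1 \in val (@oproj gT _ A (@oconj gT B' g0 (obase B')))).
  by rewrite (oproj_val sB'A h1) rcoset_refl.
change (val (c' (chi (obase B'))) = B' :* 1).
by rewrite (oconj_val _ h2) invgK mulgV.
Qed.

Lemma phi_dec : phi =1 @oproj gT _ H \o c' \o @oproj gT _ A.
Proof.
apply: orb_map_eq => //.
  apply: eq_comp; [exact: oproj_eq sKA|].
  apply: eq_comp; [exact: ec'|exact: oproj_eq sB'H].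
apply: val_inj; rewrite phi_val.
have h1 : 1 \in val (@oproj gT _ A (obase K)) by rewrite (oproj_val sKA (base_in K)) rcoset_refl.
have h2 : g0 \in val (c' (@oproj gT _ A (obase K))).
  by rewrite (oconj_val _ h1) invgK mulg1 rcoset_refl.
change (H :* g0 = val (@oproj gT _ H (c' (@oproj gT _ A (obase K))))).
by rewrite (oproj_val sB'H h2).
Qed.

Let hring := hI.1.
Let hres := hI.2.1.
Let htr := hI.2.2.1.
Let hnm := hI.2.2.2.1.
Let hcj := hI.2.2.2.2.

Lemma I_c'_tr (a : tam T (orb A)) : I a -> I (ttr c' a).
Proof. exact: hcj. Qed.

Lemma I_chi_tr (a : tam T (orb B')) : I a -> I (ttr chi a).
Proof.
move=> h; rewrite ttr_comp; [|exact: oconj_eq|exact: oproj_eq sB'A].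
by apply: htr; [exact: sB'A| apply: hcj].
Qed.

Lemma I_phi_tr (a : tam T (orb K)) : I a -> I (ttr phi a).
Proof.
move=> h; rewrite (@ttr_ext _ T _ _ _ _ phi_dec).
rewrite !ttr_comp; try (apply: eq_comp); try exact: ec';
  try exact: (oproj_eq sKA); try exact: (oproj_eq sB'H).
apply: htr; first exact: sB'H.
apply: I_c'_tr; by apply: htr; first exact: sKA.
Qed.


Lemma I_phi_nm (a : tam T (orb K)) : I a -> I (tnm phi a).
Proof.
move=> h; rewrite (@tnm_ext _ T _ _ _ _ phi_dec).
have e1 := oproj_eq sKA; have e3 := oproj_eq sB'H.
rewrite (tnm_comp (eq_comp e1 ec') e3) (tnm_comp e1 ec').
rewrite (tnm_iso ec' echi chiK chiK') -(ttr_iso ec' echi chiK chiK').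
apply: hnm; first exact: sB'H.
by apply: I_c'_tr; apply: hnm; first exact: sKA.
Qed.

Lemma projHB'K : cancel (@oproj gT _ B') (@oproj gT _ H).
Proof.
apply: (orb_map_eq (eq_comp (oproj_eq sHB') (oproj_eq sB'H)) (@equiv_id _ _)).
apply: val_inj.
have h1 : 1 \in val (@oproj gT _ B' (obase H)) by rewrite (oproj_val sHB' (base_in H)) rcoset_refl.
change (val (@oproj gT _ H (@oproj gT _ B' (obase H))) = H :* 1).
by rewrite (oproj_val sB'H h1).
Qed.
Lemma projB'HK : cancel (@oproj gT _ H) (@oproj gT _ B').
Proof.
apply: (orb_map_eq (eq_comp (oproj_eq sB'H) (oproj_eq sHB')) (@equiv_id _ _)).
apply: val_inj.
have h1 : 1 \in val (@oproj gT _ H (obase B')) by rewrite (oproj_val sB'H (base_in B')) rcoset_refl.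
change (val (@oproj gT _ B' (@oproj gT _ H (obase B'))) = B' :* 1).
by rewrite (oproj_val sHB' h1).
Qed.

Lemma I_phi_res (b : tam T (orb H)) : I b -> I (tres phi b).
Proof.
move=> h; rewrite (@tres_ext _ T _ _ _ _ phi_dec).
have e1 := oproj_eq sKA; have e3 := oproj_eq sB'H.
rewrite (tres_comp (eq_comp e1 ec') e3) (tres_comp e1 ec').
rewrite -(ttr_iso (oproj_eq sHB') e3 projHB'K projB'HK).
rewrite -(ttr_iso echi ec' chiK' chiK).
apply: hres; first exact: sKA.
apply: I_chi_tr; apply: htr; first exact: sHB'.
exact: h.
Qed.

End Phi.
End Classif.

Section Decomp.
Variables (gT : finGroupType) (W : gset gT) (u : W).
Local Open Scope group_scope.

Definition in_orb (x : W) := [exists g, x == act u g].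

Definition rest_car : finType := {x : W | ~~ in_orb x}.
Lemma rest_act_proof (x : rest_car) g : ~~ in_orb (act (val x) g).
Proof.
apply/negP=> /existsP [h /eqP e].
have := valP x; rewrite /in_orb => /negP; apply; apply/existsP; exists (h * g^-1).
by rewrite gAM -e actK.
Qed.
Definition rest_act (x : rest_car) g : rest_car := exist (fun y => ~~ in_orb y) (act (val x) g) (rest_act_proof x g).
Lemma rest_act1 x : rest_act x 1 = x.
Proof. by apply: val_inj; rewrite /= gA1. Qed.
Lemma rest_actM x a b : rest_act x (a * b) = rest_act (rest_act x a) b.
Proof. by apply: val_inj; rewrite /= gAM. Qed.
Definition restG : gset gT := @GSet gT rest_car rest_act rest_act1 rest_actM.
Definition rval (x : restG) : W := val x.
Lemma rval_eq : equivariant rval. Proof. by []. Qed.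

Definition stab_set := [set g : gT | act u g == u].
Lemma stab_gs : group_set stab_set.
Proof.
apply/group_setP; split; first by rewrite inE gA1.
move=> x y; rewrite !inE => /eqP hx /eqP hy; by rewrite gAM hx hy.
Qed.
Definition stab : {group gT} := Group stab_gs.

Lemma act_coset (y y' : gT) : y' * y^-1 \in stab -> act u y' = act u y.
Proof.
rewrite inE => /eqP e.
by rewrite -{1}(mulgKV y y') gAM e.
Qed.

Definition kap (C : orb stab) : W := act u (repr (val C)).
Lemma kap_eq : equivariant kap.
Proof.
move=> C g; rewrite /kap -gAM; apply: act_coset.
case: (orb_val C) => x e.
have h1 := in_act g (repr_in C).
have h2 := repr_in (act C g).
rewrite /= e in h1 h2; rewrite -rcosetM in h1 h2.
have := same_coset h1 h2; by rewrite /= e rcosetM.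
Qed.

Lemma kap_cp : is_coproduct kap rval.
Proof.
split; [|split; [exact: val_inj|split]].
- move=> C D e; apply: val_inj.
  case: (orb_val C) => x ex; case: (orb_val D) => y ey.
  have hC := repr_in C; have hD := repr_in D.
  rewrite ex in hC; rewrite ey in hD.
  rewrite /kap ex ey in e *.
  rewrite -(rcoset_eqP hC) -(rcoset_eqP hD); apply/rcoset_eqP.
  by rewrite mem_rcoset inE gAM e actK.
- move=> C x e; have := valP x; rewrite -/(rval x) -e /kap.
  by move/negP; apply; apply/existsP; exists (repr (val C)).
- move=> z; case hz: (in_orb z).
    left; case/existsP: hz => g /eqP ->.
    exists (exist _ (stab :* g) (rcosets_mem stab g)); rewrite /kap /=.
    apply: act_coset; apply: same_coset (rcoset_refl _ _) (mem_repr_rcoset _ _).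
  right; have hz' : ~~ in_orb z by rewrite hz.
  by exists (exist _ z hz').
Qed.

Lemma rest_card : (#|restG| < #|W|)%N.
Proof.
rewrite /= card_sig.
have -> : #|[pred x | ~~ in_orb x]| = #|[predC in_orb]| by apply: eq_card.
rewrite -(cardC in_orb) -{1}[#|[predC _]|]add0n ltn_add2r.
apply/card_gt0P; exists u; rewrite /in_orb; apply/existsP; exists 1; by rewrite gA1.
Qed.

End Decomp.

Section TRsec.
Variables (gT : finGroupType) (T : tambara gT) (J : tfamily T).
Hypothesis hJ : is_tideal J.

Lemma TR_ind n : forall (W : gset gT), (#|W| <= n)%N ->
  forall (H : {group gT}) (w : W -> orb H) (c : tam T W), equivariant w ->
  (forall (S : {group gT}) (k : orb S -> W), equivariant k -> J (tres k c)) ->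
  J (ttr w c).
Proof.
elim: n => [|n IH] W hW H w c ew hc.
  have e0 : #|W| = 0%N by apply/eqP; rewrite -leqn0.
  rewrite (tam_empty0 e0 c) (ttr0 T ew); exact: (hJ.1 H).1.
case: (pickP (@predT W)) => [u _|h0].
  rewrite (cp_ttr (@kap_eq _ _ u) (@rval_eq _ _ u) (kap_cp u) ew).
  apply: (hJ.1 H).2.1.
    apply: (I_phi_tr hJ (eq_comp (@kap_eq _ _ u) ew)); exact: hc (@kap_eq _ _ u).
  apply: IH.
  - by rewrite -ltnS (leq_trans (rest_card u) hW).
  - exact: eq_comp (@rval_eq _ _ u) ew.
  - move=> S k ek; rewrite -(tres_comp ek (@rval_eq _ _ u)).
    apply: hc; exact: eq_comp ek (@rval_eq _ _ u).
have e0 : #|W| = 0%N by apply: eq_card0.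
rewrite (tam_empty0 e0 c) (ttr0 T ew); exact: (hJ.1 H).1.
Qed.

Lemma TR (W : gset gT) (H : {group gT}) (w : W -> orb H) (c : tam T W) :
  equivariant w ->
  (forall (S : {group gT}) (k : orb S -> W), equivariant k -> J (tres k c)) ->
  J (ttr w c).
Proof. exact: (@TR_ind #|W| W (leqnn _)). Qed.
End TRsec.

Section Mono.
Variables (gT : finGroupType) (T : tambara gT).

Lemma mono (S : {group gT}) (V : gset gT) (v : V -> orb S) (g : tam T V) :
  equivariant v -> surj v ->
  exists (L : {group gT}) (k : orb L -> V) (t : tam T (orb S)),
    equivariant k /\ tnm v g = tnm (v \o k) (tres k g) * t.
Proof.
move=> ev sv; case: (sv (obase S)) => u _.
exists (stab u), (@kap _ _ u), (tnm (v \o @rval _ _ u) (tres (@rval _ _ u) g)).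
split; first exact: kap_eq.
exact: (cp_tnm (@kap_eq _ _ u) (@rval_eq _ _ u) (kap_cp u) ev).
Qed.
End Mono.

Section Prod.
Variables (gT : finGroupType) (T : tambara gT).
Variables (B1 B2 : forall S : {group gT}, tam T (orb S) -> Prop).

Definition PF (X : gset gT) (e : tam T X) :=
  exists (W V1 V2 : gset gT) (w : W -> X) (v1 : V1 -> W) (v2 : V2 -> W)
    (r : tam T W) (g1 : tam T V1) (g2 : tam T V2),
    [/\ equivariant w, equivariant v1, equivariant v2, surj v1 & surj v2] /\
        [/\ Gen B1 g1, Gen B2 g2 & e = ttr w (r * tnm v1 g1 * tnm v2 g2)].

Lemma NF_prod (X : gset gT) (a b : tam T X) : NF B1 a -> NF B2 b -> PF (a * b).
Proof.
move=> [W1 [V1 [w1 [v1 [r1 [g1 [ew1 ev1 sv1 hg1 ->]]]]]]].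
move=> [W2 [V2 [w2 [v2 [r2 [g2 [ew2 ev2 sv2 hg2 ->]]]]]]].
pose P := pbG ew2 ew1.
have ep1 : equivariant (@pb1 _ _ _ _ _ _ ew2 ew1) by apply: pb1_eq.
have ep2 : equivariant (@pb2 _ _ _ _ _ _ ew2 ew1) by apply: pb2_eq.
pose Q1 := pbG ev1 ep2.
pose Q2 := pbG ev2 ep1.
have eq11 : equivariant (@pb1 _ _ _ _ _ _ ev1 ep2) by apply: pb1_eq.
have eq12 : equivariant (@pb2 _ _ _ _ _ _ ev1 ep2) by apply: pb2_eq.
have eq21 : equivariant (@pb1 _ _ _ _ _ _ ev2 ep1) by apply: pb1_eq.
have eq22 : equivariant (@pb2 _ _ _ _ _ _ ev2 ep1) by apply: pb2_eq.
exists P, Q1, Q2, (w1 \o @pb2 _ _ _ _ _ _ ew2 ew1),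
  (@pb2 _ _ _ _ _ _ ev1 ep2), (@pb2 _ _ _ _ _ _ ev2 ep1),
  (tres (@pb2 _ _ _ _ _ _ ew2 ew1) r1 * tres (@pb1 _ _ _ _ _ _ ew2 ew1) r2),
  (tres (@pb1 _ _ _ _ _ _ ev1 ep2) g1), (tres (@pb1 _ _ _ _ _ _ ev2 ep1) g2).
split; split.
- exact: eq_comp ep2 ew1.
- exact: eq12.
- exact: eq22.
- exact: pb2_surj.
- exact: pb2_surj.
- exact: Gen_res.
- exact: Gen_res.
rewrite frobenius //.
rewrite (ttr_pullback ew2 ew1 ep1 ep2 (pb_is ew2 ew1)).
rewrite mulrC frobenius // (ttr_comp ep2 ew1); congr (ttr _ _).
rewrite !(tresM ep2) !(tresM ep1).
rewrite (tnm_pullback ev1 ep2 eq11 eq12 (pb_is ev1 ep2)).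
rewrite (tnm_pullback ev2 ep1 eq21 eq22 (pb_is ev2 ep1)).
congr (ttr _ _); ring.
Qed.
End Prod.

Section Final.
Variables (gT : finGroupType) (T : tambara gT).

Lemma tgen_ideal (S : tfamily T) : is_tideal (tgen S).
Proof.
split; [|split; [|split; [|split]]].
- move=> H; split; [|split].
  + by move=> J hJ _; exact: (hJ.1 H).1.
  + by move=> a b ha hb J hJ hS; apply: (hJ.1 H).2.1; [exact: ha|exact: hb].
  + by move=> r a ha J hJ hS; apply: (hJ.1 H).2.2; exact: ha.
- by move=> H K sHK a ha J hJ hS; apply: hJ.2.1 => //; exact: ha.
- by move=> H K sHK a ha J hJ hS; apply: hJ.2.2.1 => //; exact: ha.
- by move=> H K sHK a ha J hJ hS; apply: hJ.2.2.2.1 => //; exact: ha.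
- by move=> H g a ha J hJ hS; apply: hJ.2.2.2.2 => //; exact: ha.
Qed.

Lemma tgen_sub (S : tfamily T) H x : S H x -> tgen S H x.
Proof. by move=> h J _ hS; exact: hS. Qed.

Lemma NFo_ideal (B : forall S : {group gT}, tam T (orb S) -> Prop) :
  is_tideal (fun H (a : tam T (orb H)) => NF B a).
Proof.
split; [|split; [|split; [|split]]].
- move=> H; split; [exact: NF0|split; [exact: NF_add|exact: NF_mul]].
- by move=> H K sHK a ha; apply: NF_res => //; exact: oproj_eq.
- by move=> H K sHK a ha; apply: NF_tr => //; exact: oproj_eq.
- by move=> H K sHK a ha; apply: NF_nm => //; [exact: oproj_eq|exact: oproj_surj].
- by move=> H g a ha; apply: NF_tr => //; exact: oconj_eq.
Qed.

Definition gseq := seq {H : {group gT} & tam T (orb H)}.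

Definition Bof (s : gseq) (S : {group gT}) (d : tam T (orb S)) :=
  exists e, List.In e s /\
    exists psi : orb S -> orb (projT1 e), equivariant psi /\ d = tres psi (projT2 e).

Definition inseq (s : gseq) : tfamily T :=
  fun K y => List.In (existT (fun K => tam T (orb K)) K y) s.
Arguments inseq s H _ : clear implicits.

Lemma gen_NF (s : gseq) H x : tgen (inseq s) H x -> NF (Bof s) x.
Proof.
move=> h; apply: (h (fun H (a : tam T (orb H)) => NF (Bof s) a) (NFo_ideal _)).
move=> K y hy; apply: NF_base => S phi ephi.
by exists (existT _ K y); split=> //; exists phi.
Qed.

Lemma In_mem (U : eqType) (x : U) (s : seq U) : x \in s -> List.In x s.
Proof.
elim: s => [//|y s IH]; rewrite in_cons => /orP [/eqP ->|h]; [by left|by right; exact: IH].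
Qed.
Lemma In_enum (U : finType) (x : U) : List.In x (enum U).
Proof. by apply: In_mem; rewrite mem_enum. Qed.

Lemma In_cat (U : Type) (x : U) (s1 s2 : seq U) :
  List.In x s1 \/ List.In x s2 -> List.In x (s1 ++ s2).
Proof.
elim: s1 => [|y s1 IH] /=; first by case=> [[]|].
case=> [[->|h]|h]; [by left | right; apply: IH; by left | right; apply: IH; by right].
Qed.
Lemma In_cat_inv (U : Type) (x : U) (s1 s2 : seq U) :
  List.In x (s1 ++ s2) -> List.In x s1 \/ List.In x s2.
Proof.
elim: s1 => [|y s1 IH] /=; first by right.
by case=> [->|/IH [h|h]]; [left; left|left; right|right].
Qed.

Lemma In_flat (U V : Type) (F : U -> seq V) (l : seq U) x :
  List.In x (flatten [seq F y | y <- l]) <-> exists y, List.In y l /\ List.In x (F y).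
Proof.
elim: l => [|y l IH] /=; first by split=> // -[? []].
split.
  move=> h0; case: (In_cat_inv h0) => h; first by exists y; split; [left|].
  by case: (proj1 IH h) => z [hz hx]; exists z; split; [right|].
move=> [z [[<-|hz] hx]]; apply: In_cat; first by left.
by right; apply: (proj2 IH); exists z.
Qed.

Definition eqvb (X Y : gset gT) (f : {ffun X -> Y}) : bool :=
  [forall x, [forall g, f (act x g) == act (f x) g]].
Lemma eqvbP (X Y : gset gT) (f : {ffun X -> Y}) : eqvb f -> equivariant f.
Proof. by move=> /forallP h x g; apply/eqP; exact: (forallP (h x) g). Qed.
Lemma eqvb_ffun (X Y : gset gT) (f : X -> Y) : equivariant f -> eqvb [ffun x => f x].
Proof. by move=> e; apply/forallP=> x; apply/forallP=> g; rewrite !ffunE e. Qed.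

Definition Qlist (sI sJ : gseq) : gseq :=
  flatten [seq flatten [seq flatten [seq flatten [seq flatten [seq
  flatten [seq flatten [seq flatten [seq flatten [seq
    (if eqvb phi1 && eqvb psi1 && eqvb phi2 && eqvb psi2 then
      [:: existT (fun K => tam T (orb K)) Sg
          (tnm phi1 (tres psi1 (projT2 e1)) * tnm phi2 (tres psi2 (projT2 e2)))]
     else [::])
  | psi2 <- enum {ffun orb L2 -> orb (projT1 e2)}]
  | phi2 <- enum {ffun orb L2 -> orb Sg}]
  | psi1 <- enum {ffun orb L1 -> orb (projT1 e1)}]
  | phi1 <- enum {ffun orb L1 -> orb Sg}]
  | L2 <- enum {group gT}] | L1 <- enum {group gT}] | Sg <- enum {group gT}]
  | e2 <- sJ] | e1 <- sI].

Lemma Qlist_in (sI sJ : gseq) (S L1 L2 : {group gT}) e1 e2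
  (phi1 : orb L1 -> orb S) (psi1 : orb L1 -> orb (projT1 e1))
  (phi2 : orb L2 -> orb S) (psi2 : orb L2 -> orb (projT1 e2)) :
  List.In e1 sI -> List.In e2 sJ ->
  equivariant phi1 -> equivariant psi1 -> equivariant phi2 -> equivariant psi2 ->
  inseq (Qlist sI sJ) S
    (tnm phi1 (tres psi1 (projT2 e1)) * tnm phi2 (tres psi2 (projT2 e2))).
Proof.
move=> h1 h2 q1 q2 q3 q4; rewrite /inseq /Qlist.
apply/In_flat; exists e1; split=> //.
apply/In_flat; exists e2; split=> //.
apply/In_flat; exists S; split; first exact: In_enum.
apply/In_flat; exists L1; split; first exact: In_enum.
apply/In_flat; exists L2; split; first exact: In_enum.
apply/In_flat; exists [ffun x => phi1 x]; split; first exact: In_enum.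
apply/In_flat; exists [ffun x => psi1 x]; split; first exact: In_enum.
apply/In_flat; exists [ffun x => phi2 x]; split; first exact: In_enum.
apply/In_flat; exists [ffun x => psi2 x]; split; first exact: In_enum.
rewrite !eqvb_ffun //=; left.
rewrite (@tnm_ext _ T _ _ _ phi1); last by move=> x; rewrite ffunE.
rewrite (@tnm_ext _ T _ _ _ phi2); last by move=> x; rewrite ffunE.
rewrite (@tres_ext _ T _ _ _ psi1); last by move=> x; rewrite ffunE.
by rewrite (@tres_ext _ T _ _ _ psi2); last by move=> x; rewrite ffunE.
Qed.

Lemma Qlist_inv (sI sJ : gseq) z : List.In z (Qlist sI sJ) ->
  exists (S L1 L2 : {group gT}) e1 e2
  (phi1 : orb L1 -> orb S) (psi1 : orb L1 -> orb (projT1 e1))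
  (phi2 : orb L2 -> orb S) (psi2 : orb L2 -> orb (projT1 e2)),
  [/\ List.In e1 sI, List.In e2 sJ,
   [/\ equivariant phi1, equivariant psi1, equivariant phi2 & equivariant psi2] &
   z = existT (fun K => tam T (orb K)) S
    (tnm phi1 (tres psi1 (projT2 e1)) * tnm phi2 (tres psi2 (projT2 e2)))].
Proof.
rewrite /Qlist.
move=> /In_flat [e1 [h1 /In_flat [e2 [h2 /In_flat [S [_ /In_flat [L1 [_
  /In_flat [L2 [_ /In_flat [phi1 [_ /In_flat [psi1 [_ /In_flat [phi2 [_
  /In_flat [psi2 [_ h]]]]]]]]]]]]]]]]]].
move: h; case: ifP => // /andP [/andP [/andP [q1 q2] q3] q4] [] // <-.
exists S, L1, L2, e1, e2, phi1, psi1, phi2, psi2; split=> //.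
by split; apply: eqvbP.
Qed.

End Final.

Theorem corollary4p20 (gT : finGroupType) (T : tambara gT)
  (I J : tfamily T) :
  is_tideal I -> is_tideal J -> tfin_gen I -> tfin_gen J ->
  tfin_gen (tprod I J).
Proof.
move=> hI hJ [sI eI] [sJ eJ].
have hQ := tgen_ideal (inseq (Qlist sI sJ)).
exists (Qlist sI sJ) => H x; split.
- move=> hx; apply: (hx _ hQ) => K y [a [b [ha [hb ->]]]].
  have na := gen_NF (proj1 (eI K a) ha).
  have nb := gen_NF (proj1 (eJ K b) hb).
  case: (NF_prod na nb) => W [V1 [V2 [w [v1 [v2 [r [g1 [g2
    [[ew ev1 ev2 sv1 sv2] [hg1 hg2 ->]]]]]]]]]].
  apply: (TR hQ ew) => S k ek.
  rewrite !(tresM ek).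
  pose P1 := pbG ev1 ek.
  have p11 : equivariant (@pb1 _ _ _ _ _ _ ev1 ek) by apply: pb1_eq.
  have p12 : equivariant (@pb2 _ _ _ _ _ _ ev1 ek) by apply: pb2_eq.
  pose P2 := pbG ev2 ek.
  have p21 : equivariant (@pb1 _ _ _ _ _ _ ev2 ek) by apply: pb1_eq.
  have p22 : equivariant (@pb2 _ _ _ _ _ _ ev2 ek) by apply: pb2_eq.
  rewrite (tnm_pullback ev1 ek p11 p12 (pb_is ev1 ek)).
  rewrite (tnm_pullback ev2 ek p21 p22 (pb_is ev2 ek)).
  case: (mono (tres (@pb1 _ _ _ _ _ _ ev1 ek) g1) p12 (pb2_surj ev1 ek sv1))
    => L1 [k1 [t1 [ek1 ->]]].
  case: (mono (tres (@pb1 _ _ _ _ _ _ ev2 ek) g2) p22 (pb2_surj ev2 ek sv2))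
    => L2 [k2 [t2 [ek2 ->]]].
  have hb1 := Gen_res ek1 (Gen_res p11 hg1) (@equiv_id _ _).
  have hb2 := Gen_res ek2 (Gen_res p21 hg2) (@equiv_id _ _).
  rewrite !tres_id in hb1 hb2.
  case: hb1 => e1 [he1 [psi1 [epsi1 ->]]].
  case: hb2 => e2 [he2 [psi2 [epsi2 ->]]].
  set N1 := tnm _ (tres psi1 _); set N2 := tnm _ (tres psi2 _).
  have -> : tres k r * (N1 * t1) * (N2 * t2) = (tres k r * t1 * t2) * (N1 * N2).
    by ring.
  apply: (hQ.1 S).2.2; apply: tgen_sub.
  apply: Qlist_in => //; [exact: eq_comp ek1 p12|exact: eq_comp ek2 p22].
- move=> hx; apply: (hx _ (tgen_ideal _)) => K y hy.
  suff gen : forall z, List.In z (Qlist sI sJ) -> tprod I J (projT1 z) (projT2 z).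
    exact: (gen _ hy).
  move=> z /Qlist_inv [S [L1 [L2 [e1 [e2 [phi1 [psi1 [phi2 [psi2
    [h1 h2 [q1 q2 q3 q4] ->]]]]]]]]]] /=.
  case: e1 psi1 q2 h1 => K1 x1 psi1 q2 h1.
  case: e2 psi2 q4 h2 => K2 x2 psi2 q4 h2 /=.
  apply: tgen_sub.
  exists (tnm phi1 (tres psi1 x1)), (tnm phi2 (tres psi2 x2)); split; [|split=> //].
    apply: (I_phi_nm hI q1); apply: (I_phi_res hI q2); apply/eI.
    by apply: tgen_sub.
  apply: (I_phi_nm hJ q3); apply: (I_phi_res hJ q4); apply/eJ.
  by apply: tgen_sub.
Qed.
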